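(* For every $r\ge0$, every graph $G\in\mathcal{G}_{\Sigma,\Delta,\pi}$ and every $v\in V(G)$, we have $\omega_r(G^r_v)=\omega(G)^r_v$.
   Context: Fix an uncountably infinite set $\mathcal{V}$, sets $\Sigma,\Delta$, finite $\pi$. A graph $G$: countable $V(G)\subset\mathcal{V}$; a set $E(G)$ of pairwise disjoint two-element subsets of $V(G)\times\pi$ (write $u\!:\!i$ for $(u,i)$); partial labelings $\sigma(G):V(G)\rightharpoonup\Sigma$, $\delta(G):E(G)\rightharpoonup\Delta$; $\mathcal{G}_{\Sigma,\Delta,\pi}$ the set of graphs. $d_G$ shortest-path distance, $B_G(c,r)$ ball. Disk $G^r_c=(H,c)$: $V(H)=B_G(c,r+1)$, $E(H)$ the edges of $G$ with an endpoint in $B_G(c,r)$, $\sigma(H)=\sigma(G)|_{B_G(c,r)}$, $\delta(H)=\delta(G)|_{E(H)}$; $\mathcal{D}^r_{\Sigma,\Delta,\pi}$ the set of radius-$r$ disks. Let $\Sigma'=\Sigma\uplus\{\star\}$, $\Delta'=\Delta\uplus\{\star\}$, $\pi'=\pi\times\{0,1\}$. The encoding $\omega:\mathcal{G}_{\Sigma,\Delta,\pi}\to\mathcal{G}_{\Sigma',\Delta',\pi'}$: $V(\omega(G))=V(G)$; $\sigma(\omega(G))(u)=\sigma(G)(u)$ if defined, else $\star$; $E(\omega(G))=\{\{u\!:\!(i,0),\mathrm{trg}^\star_G(u\!:\!i)\}\mid u\in V(G),i\in\pi\}$ where $\mathrm{trg}^\star_G(u\!:\!i)=v\!:\!(j,0)$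 if $\{u\!:\!i,v\!:\!j\}\in E(G)$ and $\mathrm{trg}^\star_G(u\!:\!i)=u\!:\!(i,1)$ if $u\!:\!i$ lies in no edge of $G$ (a loopback edge); $\delta(\omega(G))(\{u\!:\!(i,0),v\!:\!(j,0)\})=\delta(G)(\{u\!:\!i,v\!:\!j\})$ if defined and $\star$ otherwise, and $\delta(\omega(G))(\{u\!:\!(i,0),u\!:\!(i,1)\})=\star$. For a radius-$r$ disk $(H,v)\in\mathcal{D}^r_{\Sigma,\Delta,\pi}$, $\omega_r((H,v)):=\omega(H)^r_v$. *)

(* Defs.v *)
From mathcomp Require Import all_boot.
From mathcomp Require Import boolp classical_sets cardinality.

Set Implicit Arguments.
Unset Strict Implicit.
Unset Printing Implicit Defensive.

Local Open Scope classical_set_scope.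

(* V = the vertex universe (\mathcal V),
   S = Sigma (vertex labels), D = Delta (edge labels), P = pi (ports).
   A vertex-port  u:i  is the pair (u, i) : V * P.
   Partial labelings are option-valued functions; "undefined" = None. *)
Record graph (V S D P : Type) := Graph {
  verts : set V;
  edges : set (set (V * P));
  vlab  : V -> option S;
  elab  : set (V * P) -> option D
}.

Arguments Graph {V S D P}.

(* Conditions for being an element of G_{Sigma,Delta,pi}; partial functions
   are normalised to be None outside their domain, so that graph equality is
   plain (extensional) equality of the record. *)
Definition is_graph (V S D : Type) (P : finType) (G : graph V S D P) : Prop :=
  [/\ countable (verts G),
      (forall e, edges G e ->
         exists x y, [/\ x <> y, e = [set x; y], verts G x.1 & verts G y.1]),
      (forall e1 e2, edges G e1 -> edges G e2 -> e1 <> e2 -> e1 `&` e2 = set0),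
      (forall u, vlab G u <> None -> verts G u) &
      (forall e, elab G e <> None -> edges G e)].

Section Defs.
Variables (V S D : Type) (P : finType).
Implicit Types (G : graph V S D P).

Definition adj G (u w : V) : Prop :=
  exists i j, edges G [set (u, i); (w, j)].

Fixpoint reach G (c : V) (n : nat) (u : V) : Prop :=
  match n with
  | 0 => u = c /\ verts G c
  | n'.+1 => reach G c n' u \/ exists w, reach G c n' w /\ adj G w u
  end.

Definition ball G (c : V) (r : nat) : set V := [set u | verts G u /\ reach G c r u].

Definition disk_edges G (c : V) (r : nat) : set (set (V * P)) :=
  [set e | edges G e /\ exists x, e x /\ ball G c r x.1].

Definition disk G (c : V) (r : nat) : graph V S D P * V :=
  (Graph (ball G c r.+1)
         (disk_edges G c r)
         (fun u => if `[< ball G c r u >] then vlab G u else None)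
         (fun e => if `[< disk_edges G c r e >] then elab G e else None),
   c).

Definition trg G (u : V) (i : P) (t : V * (P * bool)) : Prop :=
  (exists v j, edges G [set (u, i); (v, j)] /\ t = (v, (j, false)))
  \/ ((forall e, edges G e -> ~ e (u, i)) /\ t = (u, (i, true))).

Definition omega_edges G : set (set (V * (P * bool))) :=
  [set e | exists u i t, [/\ verts G u, trg G u i t & e = [set (u, (i, false)); t]]].

Definition strip (e : set (V * (P * bool))) : set (V * P) :=
  [set x | e (x.1, (x.2, false))].

(* The encoding omega.  Sigma' = option S and Delta' = option D,
   with None playing the role of the new label "star";  pi' = pi * bool
   with false = 0 and true = 1. *)
Definition omega G : graph V (option S) (option D) (P * bool)%type :=
  Graph (verts G)
        (omega_edges G)
        (fun u => if `[< verts G u >] then Some (vlab G u) else None)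
        (fun e => if `[< omega_edges G e >] then
                    Some (if `[< edges G (strip e) >] then elab G (strip e) else None)
                  else None).

End Defs.

Definition omega_r (V S D : Type) (P : finType) (r : nat) (Hv : graph V S D P * V)
  : graph V (option S) (option D) (P * bool)%type * V :=
  disk (omega Hv.1) Hv.2 r.

(* Main.v *)
Require Import Defs.
From mathcomp Require Import all_boot.
From mathcomp Require Import boolp classical_sets cardinality.
Set Implicit Arguments.
Unset Strict Implicit.
Unset Printing Implicit Defensive.
Local Open Scope classical_set_scope.

Lemma in2 (T : Type) (a b x : T) : [set a; b] x <-> x = a \/ x = b.
Proof. by []. Qed.

Lemma pair_eq (T : Type) (p q p' q' : T) : [set p; q] = [set p'; q'] ->
  (p = p' /\ q = q') \/ (p = q' /\ q = p').
Proof.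
move=> E.
have hp : [set p'; q'] p by rewrite -E; left.
have hq : [set p'; q'] q by rewrite -E; right.
have hp' : [set p; q] p' by rewrite E; left.
have hq' : [set p; q] q' by rewrite E; right.
have {}hp : p = p' \/ p = q' := hp.
have {}hq : q = p' \/ q = q' := hq.
have {}hp' : p' = p \/ p' = q := hp'.
have {}hq' : q' = p \/ q' = q := hq'.
case: hp => hp; case: hq => hq; case: hp' => hp'; case: hq' => hq'; subst; tauto.
Qed.

Section G.
Variables (V S D : Type) (P : finType).
Implicit Types (K : graph V S D P).

Definition EV K := forall e, edges K e -> forall x, e x -> verts K x.1.

Lemma reach_mono K c n m u : (n <= m)%N -> reach K c n u -> reach K c m u.
Proof.
elim: m => [|m IH]; first by rewrite leqn0 => /eqP ->.
rewrite leq_eqVlt => /orP [/eqP -> //|] H R /=; left; exact: IH.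
Qed.

Lemma reach_vc K c n u : reach K c n u -> verts K c.
Proof.
elim: n u => [|n IH] u /=; first by case.
by case=> [/IH //|[w [/IH ? _]]].
Qed.

Lemma adj_sym K w x : adj K w x -> adj K x w.
Proof. by case=> i [j E]; exists j, i; rewrite setUC. Qed.

Lemma adj_verts K w x : EV K -> adj K w x -> verts K x.
Proof. by move=> ev [i [j E]]; apply: (ev _ E (x, j)); right. Qed.

Lemma reach_verts K c n u : EV K -> reach K c n u -> verts K u.
Proof.
move=> ev; elim: n u => [|n IH] u /=; first by case=> ->.
case=> [/IH //|[w [_ A]]]; exact: adj_verts A.
Qed.

Lemma reach_sub K1 K2 c n u : verts K2 c -> (forall e, edges K1 e -> edges K2 e) ->
  reach K1 c n u -> reach K2 c n u.
Proof.
move=> vc sub; elim: n u => [|n IH] u /=; first by case.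
case=> [/IH|[w [/IH R [i [j E]]]]]; [by left|right; exists w; split=> //].
by exists i, j; apply: sub.
Qed.

Lemma adj_omega K w x : EV K -> adj (omega K) w x -> adj K w x \/ w = x.
Proof.
move=> ev [[a fa] [[b fb] [u [i [t [vu T E]]]]]].
move: E; case: T => [[y [j [Ey ->]]]|[_ ->]]; move=> /(@pair_eq (V * (P * bool))%type) [[E1 E2]|[E1 E2]];
  move: E1 E2 => [-> _ _] [-> _ _]; try by right.
- by left; exists i, j.
- by left; apply: adj_sym; exists i, j.
Qed.

Lemma omega_adj K w x : EV K -> adj K w x -> adj (omega K) w x.
Proof.
move=> ev [i [j E]]; exists (i, false), (j, false).
exists w, i, (x, (j, false)); split=> //.
- by apply: (ev _ E (w, i)); left.
- by left; exists x, j.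
Qed.

Lemma reach_omega K c n u : EV K -> reach (omega K) c n u <-> reach K c n u.
Proof.
move=> ev; elim: n u => [|n IH] u //=.
split.
- case=> [/IH|[w [/IH R /(adj_omega ev) [A|<-]]]]; [by left|by right; exists w|by left].
- case=> [/IH|[w [/IH R A]]]; [by left|right; exists w; split=> //; exact: omega_adj].
Qed.

End G.

Lemma two_in (T : Type) (e : set T) a b x z : e = [set a; b] -> e x -> e z ->
  x = z \/ e = [set x; z].
Proof.
move=> -> [->|->] [->|->]; try by left.
- by right.
- by right; rewrite setUC.
Qed.

Section H.
Variables (V S D : Type) (P : finType) (G : graph V S D P) (v : V) (r : nat).
Hypothesis gG : is_graph G.
Hypothesis vG : verts G v.
Variable H : graph V S D P.
Hypothesis hv : verts H = ball G v r.+1.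
Hypothesis he : edges H = disk_edges G v r.
Hypothesis hl : vlab H = fun u => if `[< ball G v r u >] then vlab G u else None.
Hypothesis hel : elab H = fun e => if `[< disk_edges G v r e >] then elab G e else None.

Lemma EV_G : EV G.
Proof.
case: gG => _ h _ _ _ e /h [x [y [_ -> vx vy]]] z [->|->] //.
Qed.

Lemma EV_H : EV H.
Proof.
move=> e; rewrite he hv => -[eG [x [ex bx]]] z ez.
have vz := EV_G eG ez.
split=> //.
case: gG => _ h _ _ _; case: (h _ eG) => a [b [_ Eab _ _]].
case: (two_in Eab ex ez) => [<-|Exz]; first by case: bx => _; apply: reach_mono.
right; exists x.1; split; first by case: bx.
by case: x z {ex ez bx} Exz vz => x1 x2 [z1 z2] E _; exists x2, z2; rewrite -E.
Qed.

Lemma reach_H n u : (n <= r.+1)%N -> reach H v n u <-> reach G v n u.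
Proof.
move=> hn; split; first by apply: reach_sub => // e; rewrite he; case.
elim: n u hn => [|n IH] u hn /=.
  case=> -> _; split=> //; rewrite hv; split=> //; by apply: (reach_mono (n:=0)).
case=> [R|[w [R [i [j E]]]]]; first by left; apply: IH => //; exact: ltnW.
right; exists w; split; first by apply: IH => //; exact: ltnW.
exists i, j; rewrite he; split=> //; exists (w, i); split; first by left.
split; first exact: reach_verts EV_G R.
by apply: reach_mono R.
Qed.

Lemma ballOH n : (n <= r.+1)%N -> ball (omega H) v n = ball G v n.
Proof.
move=> hn; apply: funext => u; apply: propext.
rewrite /ball /= (reach_omega _ _ _ EV_H) (reach_H _ hn) hv.
split; first by case=> -[].
move=> [vu R]; split=> //; split=> //; exact: reach_mono R.
Qed.

Lemma ballOG n : ball (omega G) v n = ball G v n.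
Proof.
apply: funext => u; apply: propext.
by rewrite /ball /= (reach_omega _ _ _ EV_G).
Qed.

Lemma transfer (K1 K2 : graph V S D P)
  (hE : forall e, (exists x, e x /\ ball G v r x.1) -> (edges K1 e <-> edges K2 e))
  (hV : forall u, ball G v r u -> verts K1 u /\ verts K2 u) e x :
  e x -> ball G v r x.1 -> omega_edges K1 e -> omega_edges K2 e.
Proof.
have trgT u i t : ball G v r u -> trg K1 u i t -> trg K2 u i t.
  move=> bu [[w [j [E ->]]]|[N ->]].
  - left; exists w, j; split=> //; apply/hE => //; exists (u, i); split=> //; by left.
  - right; split=> // e' E' e'u; apply: (N e') => //; apply/hE => //; by exists (u, i).
move=> ex bx [u [i [t [vu T E]]]]; subst e.
case: ex => [xu|xt].
  rewrite xu /= in bx; exists u, i, t; split=> //; [by case: (hV u bx)|exact: trgT].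
case: T => [[w [j [Ew tw]]]|[N tl]].
  subst t; rewrite xt /= in bx.
  exists w, j, (u, (i, false)); split; first by case: (hV w bx).
  - left; exists u, i; split=> //.
    have ex' : exists y, [set (w, j); (u, i)] y /\ ball G v r y.1.
      by exists (w, j); split=> //; left.
    apply: (proj1 (hE _ ex')); by rewrite setUC.
  - by rewrite setUC.
subst t; rewrite xt /= in bx.
exists u, i, (u, (i, true)); split=> //; [by case: (hV u bx)|apply: trgT => //; by right].
Qed.

Lemma stripE e x : omega_edges G e -> e x -> ball G v r x.1 ->
  exists y, strip e y /\ ball G v r y.1.
Proof.
move=> [u [i [t [vu T ->]]]] [xu|xt] bx.
  by exists (u, i); split; [left|rewrite xu in bx].
case: T => [[w [j [Ew tw]]]|[N tl]].
  by exists (w, j); split; [right; rewrite tw|rewrite xt tw in bx].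
by exists (u, i); split; [left|rewrite xt tl in bx].
Qed.

Lemma hEH e : (exists x, e x /\ ball G v r x.1) -> (edges H e <-> edges G e).
Proof. by move=> ex; rewrite he; split; [case|move=> ?; split]. Qed.

Lemma hVH u : ball G v r u -> verts H u /\ verts G u.
Proof.
move=> [vu R]; split=> //; rewrite hv; split=> //; exact: reach_mono R.
Qed.

Lemma DE : disk_edges (omega H) v r = disk_edges (omega G) v r.
Proof.
apply: funext => e; apply: propext.
rewrite /disk_edges /= (ballOH (leqnSn r)) ballOG.
split=> -[E [x [ex bx]]]; (split; last by exists x).
- by apply: (transfer (K1 := H) _ _ ex bx E); [exact: hEH|exact: hVH].
- apply: (transfer (K1 := G) _ _ ex bx E) => [e' ex'|u bu].
  + exact: iff_sym (hEH ex').
  + by case: (hVH bu).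
Qed.

Lemma mainH : disk (omega H) v r = disk (omega G) v r.
Proof.
rewrite /disk; f_equal; f_equal.
- by rewrite ballOH // ballOG.
- exact: DE.
- apply: funext => u /=; rewrite (ballOH (leqnSn r)) ballOG hl hv.
  have [b|nb] := pselect (ball G v r u); last by rewrite (asboolF nb).
  rewrite (asboolT b) (asboolT (hVH b).2).
  by case: (hVH b); rewrite hv => h _; rewrite (asboolT h).
- apply: funext => e /=; rewrite DE.
  have [d|nd] := pselect (disk_edges (omega G) v r e); last by rewrite (asboolF nd).
  case: d => oG [x [ex bx]]; rewrite ballOG in bx.
  have oH : omega_edges H e.
    apply: (transfer (K1 := G) _ _ ex bx oG) => [e' ex'|u bu].
    + exact: iff_sym (hEH ex').
    + by case: (hVH bu).
  rewrite (asboolT oH) (asboolT oG).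
  have [y [sy by_]] := stripE oG ex bx.
  have -> : edges H (strip e) = edges G (strip e).
    by apply: propext; apply: hEH; exists y.
  rewrite hel /=.
  have [g|ng] := pselect (edges G (strip e)); last by rewrite (asboolF ng).
  have dg : disk_edges G v r (strip e) by split=> //; exists y.
  by rewrite (asboolT g) (asboolT dg).
Qed.

End H.

Theorem proposition3p1 (V S D : Type) (P : finType)
  (V_uncountable : ~ countable [set: V])
  (r : nat) (G : graph V S D P) (v : V) :
  is_graph G -> verts G v ->
  omega_r r (disk G v r) = disk (omega G) v r.
Proof.
move=> gG vG; rewrite /omega_r.
by apply: mainH.
Qed.
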